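(* If $T$ is the modular tree of a finite graph $X$, then ${\rm Aut}(X)\cong{\rm Aut}(T)$, where ${\rm Aut}(T)$ consists of the automorphisms of $T$ that preserve the types of vertices (normal/marker) and of edges (normal/tree) and the orientation of tree edges.
   Context: A module of a graph $X$ is a set $M\subseteq V(X)$ such that every $x\in V(X)\setminus M$ is adjacent either to all vertices of $M$ or to none. A module is trivial if it equals $V(X)$ or has size $1$; a graph is prime if all its modules are trivial, and degenerate if it is $K_n$ or $\overline{K_n}$. Two disjoint modules are adjacent if all edges between them are present. For a modular partition $\mathcal P=\{M_1,\dots,M_k\}$ of $V(X)$, the quotient $X/\mathcal P$ has vertices $m_1,\dots,m_k$ with $m_im_j$ an edge iff $M_i,M_j$ are adjacent. Modular decomposition: if $X$ is prime or degenerate, stop; if $X$ and $\overline X$ are connected, use the partition into inclusion-maximal proper modules; if $X$ is disconnected (and $\overline X$ connected), use the connected components of $X$; if $\overline X$ is disconnected (and $X$ connected), use the connected components of $\overline X$; recurse on each part. The modular tree $T$ (with normal and marker vertices, normal edges and directed tree edges, and a root node) is defined recursively: if $X$ is prime or degenerate, $T=X$ is its own root node. Otherwise, with $\mathcal P=\{M_1,\dots,M_k\}$ the partition used and $T_i$ the modular tree of $X[M_i]$, $T$ is the disjoint union of the $T_i$ and of the quotient $X/\mathcal P$ (the root node, with marker vertices $m_1,\dots,m_k$); to each $T_i$ a new marker vertex $m_i'$ adjacent exactly to the root node of $T_i$ is added, together with a tree edge oriented from $m_i$ to $m_i'$. *)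

(* Defs.v *)
From HB Require Import structures.
From mathcomp Require Import all_boot all_order all_fingroup.
Set Implicit Arguments. Unset Strict Implicit. Unset Printing Implicit Defensive.

Section ModularTree.
Variables (V : finType) (e : rel V).

Definition is_module (A M : {set V}) : bool :=
  [&& M \subset A, M != set0 &
   [forall x in A :\: M, [forall y in M, e x y] || [forall y in M, ~~ e x y]]].

Definition trivial_module (A M : {set V}) : bool := (M == A) || (#|M| == 1).

Definition is_prime (A : {set V}) : bool :=
  [forall M : {set V}, is_module A M ==> trivial_module A M].

Definition is_degenerate (A : {set V}) : bool :=
  [forall x in A, forall y in A, (x != y) ==> e x y] ||
  [forall x in A, forall y in A, ~~ e x y].

Definition adjA (A : {set V}) : rel V := fun x y => [&& x \in A, y \in A & e x y].
Definition coadjA (A : {set V}) : rel V :=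
  fun x y => [&& x \in A, y \in A, x != y & ~~ e x y].

Definition rconnected (A : {set V}) (r : rel V) : bool :=
  [forall x in A, forall y in A, connect r x y].

Definition rcomponents (A : {set V}) (r : rel V) : {set {set V}} :=
  [set [set y in A | connect r x y] | x in A].

Definition proper_module (A M : {set V}) : bool := is_module A M && (M != A).

Definition max_proper_modules (A : {set V}) : {set {set V}} :=
  [set M | proper_module A M &&
           [forall N : {set V}, (proper_module A N && (M \subset N)) ==> (N == M)]].

Definition children (A : {set V}) : {set {set V}} :=
  if is_prime A || is_degenerate A then set0
  else if rconnected A (adjA A) && rconnected A (coadjA A) then max_proper_modules A
  else if ~~ rconnected A (adjA A) then rcomponents A (adjA A)
  else rcomponents A (coadjA A).

Definition nodes : {set {set V}} :=
  fixset (fun S : {set {set V}} => setT |: \bigcup_(A in S) children A).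

Definition is_leaf (A : {set V}) : bool := children A == set0.

(* Vertices of the modular tree T:
   inl v       : the normal vertex v of X;
   inr (M,false): the marker vertex m_M in the node of the parent of M;
   inr (M,true) : the marker vertex m_M' in the root node of T_M.
   (for every non-root node M) *)
Definition tvalid (t : V + ({set V} * bool)) : bool :=
  match t with
  | inl _ => true
  | inr (M, _) => (M \in nodes) && (M != setT)
  end.

Definition tvert := {t : V + ({set V} * bool) | tvalid t}.

Definition is_normal (t : tvert) : bool := if val t is inl _ then true else false.

Definition adjacent_modules (M N : {set V}) : bool :=
  [forall x in M, forall y in N, e x y].

Definition nedge_raw (s t : V + ({set V} * bool)) : bool :=
  match s, t with
  | inl u, inl v =>
      e u v && [exists L in nodes, [&& is_leaf L, u \in L & v \in L]]
  | inl v, inr (M, true) | inr (M, true), inl v => is_leaf M && (v \in M)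
  | inr (Mi, false), inr (Mj, false) =>
      [&& Mi != Mj, [exists A in nodes, (Mi \in children A) && (Mj \in children A)]
        & adjacent_modules Mi Mj]
  | inr (Mi, false), inr (M, true) | inr (M, true), inr (Mi, false) =>
      Mi \in children M
  | _, _ => false
  end.

Definition tnedge : rel tvert := fun s t => nedge_raw (val s) (val t).

Definition ttedge : rel tvert := fun s t =>
  match val s, val t with
  | inr (M, false), inr (N, true) => M == N
  | _, _ => false
  end.

Definition AutX : {set {perm V}} :=
  [set p : {perm V} | [forall x, forall y, e (p x) (p y) == e x y]].

Definition AutT : {set {perm tvert}} :=
  [set p : {perm tvert} | [forall s, is_normal (p s) == is_normal s] &&
     [forall s, forall t, (tnedge (p s) (p t) == tnedge s t) &&
                          (ttedge (p s) (p t) == ttedge s t)]].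

End ModularTree.

(* Main.v *)
From HB Require Import structures.
From mathcomp Require Import all_boot all_order all_fingroup.
Require Import Defs.
From mathcomp Require Import zify.
Set Implicit Arguments. Unset Strict Implicit. Unset Printing Implicit Defensive.
Section P.
Variables (V : finType) (e : rel V).
Hypotheses (esym : symmetric e) (eirr : irreflexive e).
Section Transport.
Variable s : {perm V}.
Hypothesis hs : forall x y, e (s x) (s y) = e x y.
Notation im := (fun A : {set V} => s @: A).
Lemma memI x (A : {set V}) : (s x \in s @: A) = (x \in A).
Proof. by rewrite mem_imset //; apply: perm_inj. Qed.
Lemma imK (M : {set V}) : s @: ((s^-1)%g @: M) = M.
Proof.
by rewrite -imset_comp (eq_imset _ (fun x => permKV s x)) imset_id.
Qed.
Lemma imKV (M : {set V}) : (s^-1)%g @: (s @: M) = M.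
Proof.
by rewrite -imset_comp (eq_imset _ (fun x => permK s x)) imset_id.
Qed.
Lemma im_inj : injective im.
Proof. by move=> A B H; rewrite -(imKV A) H imKV. Qed.
Lemma forall_in_im (A : {set V}) (P : pred V) :
  [forall x in s @: A, P x] = [forall x in A, P (s x)].
Proof.
apply/forall_inP/forall_inP => H x Hx; first by apply: H; rewrite memI.
by case/imsetP: Hx => y Hy ->; apply: H.
Qed.
Lemma exists_in_im (A : {set V}) (P : pred V) :
  [exists x in s @: A, P x] = [exists x in A, P (s x)].
Proof.
apply/exists_inP/exists_inP => -[x Hx Px].
  by case/imsetP: Hx Px => y Hy -> Py; exists y.
by exists (s x); rewrite ?memI.
Qed.
Lemma forall_set_im (P : pred {set V}) :
  [forall M : {set V}, P M] = [forall M : {set V}, P (s @: M)].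
Proof.
apply/forallP/forallP => H M; first exact: H (s @: M).
by rewrite -(imK M); apply: H.
Qed.
Lemma subI (A B : {set V}) : (s @: A \subset s @: B) = (A \subset B).
Proof.
apply/idP/idP; last exact: imsetS.
by move/(imsetS (fun x => (s^-1)%g x)); rewrite !imKV.
Qed.
Lemma eqI (A B : {set V}) : (s @: A == s @: B) = (A == B).
Proof. by apply/eqP/eqP => [/im_inj|->]. Qed.
Lemma imD (A B : {set V}) : s @: (A :\: B) = s @: A :\: s @: B.
Proof.
apply/setP => y; apply/imsetP/setDP.
  by case=> x /setDP[xA xB] ->; rewrite !memI.
case=> /imsetP[x xA ->]; rewrite memI => xB; exists x => //; exact/setDP.
Qed.
Lemma cardI (A : {set V}) : #|s @: A| = #|A|.
Proof. by rewrite card_imset //; apply: perm_inj. Qed.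

Lemma is_moduleI (A M : {set V}) : is_module e (s @: A) (s @: M) = is_module e A M.
Proof.
rewrite /is_module subI imset_eq0 -imD forall_in_im; congr [&& _, _ & _].
apply: eq_forallb => x; rewrite !forall_in_im.
by congr (_ ==> (_ || _)); apply: eq_forallb => y; rewrite hs.
Qed.
Lemma is_primeI (A : {set V}) : is_prime e (s @: A) = is_prime e A.
Proof.
rewrite /is_prime forall_set_im; apply: eq_forallb => M.
by rewrite is_moduleI /trivial_module eqI cardI.
Qed.
Lemma is_degI (A : {set V}) : is_degenerate e (s @: A) = is_degenerate e A.
Proof.
rewrite /is_degenerate !forall_in_im.
congr (_ || _); apply: eq_forallb => x; rewrite forall_in_im;
  congr (_ ==> _); apply: eq_forallb => y; rewrite ?hs //.
by rewrite (inj_eq perm_inj).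
Qed.
Lemma adjAI (A : {set V}) x y : adjA e (s @: A) (s x) (s y) = adjA e A x y.
Proof. by rewrite /adjA !memI hs. Qed.
Lemma coadjAI (A : {set V}) x y : coadjA e (s @: A) (s x) (s y) = coadjA e A x y.
Proof. by rewrite /coadjA !memI hs (inj_eq perm_inj). Qed.
Lemma connectI (r r' : rel V) : (forall x y, r' (s x) (s y) = r x y) ->
  forall x y, connect r' (s x) (s y) = connect r x y.
Proof.
move=> hr.
have H (r1 r2 : rel V) (f : {perm V}) : (forall x y, r2 (f x) (f y) = r1 x y) ->
   forall x y, connect r1 x y -> connect r2 (f x) (f y).
  move=> h x _ /connectP[p pp ->]; apply/connectP; exists (map f p).
    by rewrite (@map_path _ _ f r2 r1 pred0) //; apply/hasPn => z.
  by rewrite last_map.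
move=> x y; apply/idP/idP; last exact: H.
move/(H r' r (s^-1)%g); rewrite !permK; apply=> u v.
by rewrite -hr !permKV.
Qed.
Lemma rconnI (A : {set V}) (r r' : rel V) : (forall x y, r' (s x) (s y) = r x y) ->
  rconnected (s @: A) r' = rconnected A r.
Proof.
move=> hr; rewrite /rconnected forall_in_im; apply: eq_forallb => x.
by rewrite forall_in_im; congr (_ ==> _); apply: eq_forallb => y; rewrite (connectI hr).
Qed.

Lemma compI (A : {set V}) (r r' : rel V) (hr : forall x y, r' (s x) (s y) = r x y) x :
  [set y in s @: A | connect r' (s x) y] = s @: [set y in A | connect r x y].
Proof.
apply/setP=> y; have -> : y = s ((s^-1)%g y) by rewrite permKV.
by rewrite memI !inE memI (connectI hr).
Qed.
Lemma rcompI (A : {set V}) (r r' : rel V) (hr : forall x y, r' (s x) (s y) = r x y) :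
  rcomponents (s @: A) r' = [set s @: C | C : {set V} in rcomponents A r].
Proof.
rewrite /rcomponents -imset_comp -imset_comp; apply: eq_imset => x /=.
exact: compI.
Qed.
Lemma imT : s @: [set: V] = [set: V].
Proof. by apply/setP=> y; rewrite inE; apply/imsetP; exists ((s^-1)%g y); rewrite ?permKV. Qed.
Lemma memII (S : {set {set V}}) (M : {set V}) : (s @: M \in [set s @: C | C : {set V} in S]) = (M \in S).
Proof. by rewrite mem_imset //; apply: im_inj. Qed.
Lemma maxpI (A : {set V}) :
  max_proper_modules e (s @: A) = [set s @: C | C : {set V} in max_proper_modules e A].
Proof.
apply/setP => M'; rewrite -(imK M') memII !inE /proper_module is_moduleI eqI.
congr (_ && _); rewrite forall_set_im; apply: eq_forallb => N.
by rewrite is_moduleI !eqI subI.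
Qed.
Lemma childrenI (A : {set V}) :
  children e (s @: A) = [set s @: C | C : {set V} in children e A].
Proof.
rewrite /children is_primeI is_degI (rconnI _ (adjAI A)) (rconnI _ (coadjAI A)).
case: ifP => _; first by rewrite imset0.
case: ifP => _; first exact: maxpI.
case: ifP => _; [exact: rcompI (adjAI A) | exact: rcompI (coadjAI A)].
Qed.
Lemma iter_im k (M : {set V}) :
  M \in iter k (fun S : {set {set V}} => setT |: \bigcup_(A in S) children e A) set0 ->
  s @: M \in iter k (fun S : {set {set V}} => setT |: \bigcup_(A in S) children e A) set0.
Proof.
elim: k M => [|k IH] M /=; first by rewrite inE.
case/setU1P => [->|]; first by rewrite imT setU11.
case/bigcupP => A HA HM; apply/setU1P; right; apply/bigcupP; exists (s @: A).
  exact: IH.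
by rewrite childrenI memII.
Qed.
Lemma nodes_im (M : {set V}) : M \in nodes e -> s @: M \in nodes e.
Proof. exact: iter_im. Qed.
Lemma leafI (M : {set V}) : is_leaf e (s @: M) = is_leaf e M.
Proof. by rewrite /is_leaf childrenI imset_eq0. Qed.
Lemma adjmI (M N : {set V}) : adjacent_modules e (s @: M) (s @: N) = adjacent_modules e M N.
Proof.
rewrite /adjacent_modules forall_in_im; apply: eq_forallb => x.
by rewrite forall_in_im; congr (_ ==> _); apply: eq_forallb => y; rewrite hs.
Qed.
End Transport.

Lemma autX_hs (s : {perm V}) : s \in AutX e -> forall x y, e (s x) (s y) = e x y.
Proof. by rewrite inE => /forallP H x y; apply/eqP; apply: (forallP (H x) y). Qed.
Lemma autX_hsE (s : {perm V}) : (forall x y, e (s x) (s y) = e x y) -> s \in AutX e.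
Proof. by move=> H; rewrite inE; apply/forallP=> x; apply/forallP=> y; rewrite H. Qed.
Lemma autX_inv (s : {perm V}) : s \in AutX e -> (s^-1)%g \in AutX e.
Proof. move/autX_hs=> H; apply: autX_hsE => x y; by rewrite -H !permKV. Qed.
Lemma autX_mul (s t : {perm V}) : s \in AutX e -> t \in AutX e -> (s * t)%g \in AutX e.
Proof. move=> /autX_hs Hs /autX_hs Ht; apply: autX_hsE => x y; by rewrite !permM Ht Hs. Qed.
Lemma nodesI (s : {perm V}) (M : {set V}) : s \in AutX e ->
  (s @: M \in nodes e) = (M \in nodes e).
Proof.
move=> sA; apply/idP/idP; last exact: (nodes_im (autX_hs sA)).
move/(nodes_im (autX_hs (autX_inv sA))); by rewrite imKV.
Qed.

Definition rawmap (s : {perm V}) (t : V + ({set V} * bool)) : V + ({set V} * bool) :=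
  match t with inl v => inl (s v) | inr (M, b) => inr (s @: M, b) end.

Lemma rawmap_inj s : injective (rawmap s).
Proof.
move=> [v|[M b]] [w|[N c]] //= [].
- by move/perm_inj->.
- by move/im_inj=> -> ->.
Qed.

Section AutXel.
Variable s : {perm V}.
Hypothesis sA : s \in AutX e.
Let hs := autX_hs sA.

Lemma tvalidI t : tvalid e (rawmap s t) = tvalid e t.
Proof.
case: t => [v|[M b]] //=; rewrite nodesI //.
by rewrite -{1}(imT s) eqI.
Qed.

Lemma exists_nodesI (P : pred {set V}) :
  [exists L in nodes e, P (s @: L)] = [exists L in nodes e, P L].
Proof.
apply/exists_inP/exists_inP => -[L HL PL].
  by exists (s @: L); rewrite ?nodesI.
exists ((s^-1)%g @: L); last by rewrite imK.
by rewrite -(nodesI _ sA) imK.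
Qed.

Lemma nedgeI t u : nedge_raw e (rawmap s t) (rawmap s u) = nedge_raw e t u.
Proof.
case: t => [v|[M []]]; case: u => [w|[N []]] //=.
- rewrite hs; congr (_ && _).
  by rewrite -exists_nodesI; apply: eq_existsb => L; rewrite leafI ?memI.
- by rewrite leafI ?memI.
- by rewrite leafI ?memI.
- by rewrite (childrenI hs) memII.
- by rewrite (childrenI hs) memII.
- rewrite eqI adjmI //; congr (_ && (_ && _)).
  by rewrite -exists_nodesI; apply: eq_existsb => L; rewrite (childrenI hs) !memII.
Qed.
End AutXel.

Definition liftf (s : {perm V}) (t : tvert e) : tvert e :=
  if s \in AutX e then insubd t (rawmap s (val t)) else t.

Lemma liftf_val s t : s \in AutX e -> val (liftf s t) = rawmap s (val t).
Proof.
move=> sA; have H : tvalid e (rawmap s (val t)) by rewrite tvalidI //; exact: (valP t).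
by rewrite /liftf sA insubdK.
Qed.

Lemma liftf_inj s : injective (liftf s).
Proof.
rewrite /liftf; case sA: (s \in AutX e) => [|] t u H //.
move: H; rewrite -/(liftf s t) -/(liftf s u) => H.
apply: val_inj; apply: (@rawmap_inj s).
by rewrite -!(liftf_val _ sA) /liftf sA H.
Qed.

Definition lift s : {perm (tvert e)} := perm (@liftf_inj s).

Lemma lift_val s t : s \in AutX e -> val (lift s t) = rawmap s (val t).
Proof. by move=> sA; rewrite permE liftf_val. Qed.

Lemma lift_autT s : s \in AutX e -> lift s \in AutT e.
Proof.
move=> sA; rewrite inE; apply/andP; split.
  apply/forallP=> t; rewrite /is_normal lift_val //.
  by case: (val t) => [v|[M b]].
apply/forallP=> t; apply/forallP=> u.
rewrite /tnedge /ttedge !lift_val // nedgeI // eqxx /=.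
case: (val t) => [v|[M []]]; case: (val u) => [w|[N []]] //=.
by rewrite eqI.
Qed.

Lemma lift_morph s t : s \in AutX e -> t \in AutX e -> lift (s * t) = (lift s * lift t)%g.
Proof.
move=> sA tA; apply/permP => u; apply: val_inj.
rewrite permM !lift_val ?autX_mul //.
case: (val u) => [v|[M b]] /=; first by rewrite permM.
congr (inr (_, b)); rewrite -imset_comp; apply: eq_imset => x; exact: permM.
Qed.


Lemma moduleP (A M : {set V}) : is_module e A M ->
  [/\ M \subset A, M != set0 &
    forall x y1 y2, x \in A -> x \notin M -> y1 \in M -> y2 \in M -> e x y1 = e x y2].
Proof.
case/and3P => sub ne /forall_inP H; split => // x y1 y2 xA xM y1M y2M.
have /orP[] := H x (ltac:(by rewrite in_setD xM xA)) => /forall_inP H'.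
  by rewrite !H'.
by rewrite (negbTE (H' _ y1M)) (negbTE (H' _ y2M)).
Qed.


Lemma moduleI (A M : {set V}) : M \subset A -> M != set0 ->
  (forall x y1 y2, x \in A -> x \notin M -> y1 \in M -> y2 \in M -> e x y1 = e x y2) ->
  is_module e A M.
Proof.
move=> sub ne H; rewrite /is_module sub ne /=; apply/forall_inP => x.
rewrite in_setD => /andP[xM xA].
case: (set_0Vmem M) => [M0|[y yM]]; first by rewrite M0 eqxx in ne.
case E: (e x y); [apply/orP; left | apply/orP; right]; apply/forall_inP => y' y'M.
  by rewrite (H x y' y) ?E.
by rewrite (H x y' y) ?E.
Qed.

Lemma connect_inv (P : pred V) (r : rel V) : (forall u w, r u w -> P u -> P w) ->
  forall x y, connect r x y -> P x -> P y.
Proof.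
move=> H x y /connectP[q pq ->]; elim: q x pq => //= z q IH x /andP[rxz pq] Px.
exact: IH pq (H _ _ rxz Px).
Qed.

Lemma adj_sym A : symmetric (adjA e A).
Proof. by move=> x y; rewrite /adjA esym andbCA. Qed.
Lemma coadj_sym A : symmetric (coadjA e A).
Proof. by move=> x y; rewrite /coadjA esym eq_sym; case: (x \in A); case: (y \in A). Qed.

Section Comp.
Variables (A : {set V}) (r : rel V).
Hypothesis rsym : symmetric r.
Let csym := sym_connect_sym rsym.

Lemma rcomp_sub C : C \in rcomponents A r -> C \subset A.
Proof. by case/imsetP => x _ ->; apply/subsetP => y; rewrite inE => /andP[]. Qed.

Lemma rcomp_cover x : x \in A -> exists2 C, C \in rcomponents A r & x \in C.
Proof.
move=> xA; exists [set y in A | connect r x y]; first exact: imset_f.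
by rewrite inE xA connect0.
Qed.

Lemma rcomp_disj C D z : C \in rcomponents A r -> D \in rcomponents A r ->
  z \in C -> z \in D -> C = D.
Proof.
case/imsetP => x _ -> /imsetP[y _ ->]; rewrite !inE => /andP[_ xz] /andP[_ yz].
apply/setP => w; rewrite !inE; congr (_ && _).
apply/idP/idP => H.
  by apply: (connect_trans yz); apply: (connect_trans _ H); rewrite csym.
by apply: (connect_trans xz); apply: (connect_trans _ H); rewrite csym.
Qed.

Lemma rcomp_proper C : ~~ rconnected A r -> C \in rcomponents A r -> C != A.
Proof.
move=> nc /imsetP[x xA ->]; apply: contra nc => /eqP HC.
apply/forall_inP => y yA; apply/forall_inP => z zA.
have : y \in [set y in A | connect r x y] by rewrite HC.
have : z \in [set y in A | connect r x y] by rewrite HC.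
rewrite !inE => /andP[_ xz] /andP[_ xy].
by apply: connect_trans xz; rewrite csym.
Qed.
End Comp.

Lemma adj_closed A x y : connect (adjA e A) x y -> x \in A -> y \in A.
Proof. by apply: connect_inv => u w /and3P[]. Qed.
Lemma coadj_closed A x y : connect (coadjA e A) x y -> x \in A -> y \in A.
Proof. by apply: connect_inv => u w /and4P[]. Qed.

Lemma rcomp_adj_module A C : C \in rcomponents A (adjA e A) -> is_module e A C.
Proof.
move=> HC; have sub := rcomp_sub HC.
case/imsetP: HC => z zA Cdef; apply: moduleI.
- exact: sub.
- by apply/set0Pn; exists z; rewrite Cdef inE zA connect0.
move=> x y1 y2 xA xC; rewrite Cdef !inE => /andP[y1A zy1] /andP[y2A zy2].
have H y : y \in A -> connect (adjA e A) z y -> e x y = false.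
  move=> yA zy; apply/negP => exy; move: xC; rewrite Cdef inE xA /=.
  by rewrite (connect_trans zy) // connect1 // /adjA yA xA esym.
by rewrite !H.
Qed.

Lemma rcomp_coadj_module A C : C \in rcomponents A (coadjA e A) -> is_module e A C.
Proof.
move=> HC; have sub := rcomp_sub HC.
case/imsetP: HC => z zA Cdef; apply: moduleI.
- exact: sub.
- by apply/set0Pn; exists z; rewrite Cdef inE zA connect0.
move=> x y1 y2 xA xC; rewrite Cdef !inE => /andP[y1A zy1] /andP[y2A zy2].
have H y : y \in A -> connect (coadjA e A) z y -> e x y = true.
  move=> yA zy; apply/negPn/negP => exy.
  have xy : x != y by apply: contra xC => /eqP ->; rewrite Cdef inE yA zy.
  move: xC; rewrite Cdef inE xA /= (connect_trans zy) //.
  by rewrite connect1 // /coadjA yA xA eq_sym xy esym exy.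
by rewrite !H.
Qed.


Lemma maxpP (A M : {set V}) : M \in max_proper_modules e A ->
  [/\ is_module e A M, M != A &
     forall N, is_module e A N -> N != A -> M \subset N -> N = M].
Proof.
rewrite inE => /andP[/andP[mM MA] /forallP H]; split => // N mN NA MN.
by apply/eqP; move: (H N); rewrite /proper_module mN NA MN.
Qed.

Lemma exmax (A : {set V}) n (N : {set V}) : #|A| - #|N| <= n -> is_module e A N -> N != A ->
  exists2 M, M \in max_proper_modules e A & N \subset M.
Proof.
elim: n N => [|n IH] N Hn mN NA.
all: case: (boolP [forall N', (proper_module e A N' && (N \subset N')) ==> (N' == N)]).
- by move=> H; exists N => //; rewrite inE /proper_module mN NA.
- move/forallPn => [N'] /=; rewrite negb_imply => /andP[/andP[/andP[mN' N'A] NN'] N'N].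
  have [sN' _ _] := moduleP mN'; have [sN _ _] := moduleP mN.
  have lt : #|N| < #|N'| by apply: proper_card; rewrite properEneq eq_sym N'N NN'.
  have le := subset_leq_card sN'. lia.
- by move=> H; exists N => //; rewrite inE /proper_module mN NA.
- move/forallPn => [N'] /=; rewrite negb_imply => /andP[/andP[/andP[mN' N'A] NN'] N'N].
  have [sN' _ _] := moduleP mN'; have [sN _ _] := moduleP mN.
  have lt : #|N| < #|N'| by apply: proper_card; rewrite properEneq eq_sym N'N NN'.
  have le := subset_leq_card sN'.
  have [M HM N'M] := IH N' (ltac:(lia)) mN' N'A.
  by exists M => //; apply: subset_trans N'M.
Qed.

Lemma maxp_cover (A : {set V}) x : ~~ is_prime e A -> x \in A ->
  exists2 M, M \in max_proper_modules e A & x \in M.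
Proof.
move=> /forallPn[M0] /=; rewrite negb_imply /trivial_module negb_or => /andP[m0 /andP[M0A c0]] xA.
have [s0 ne0 _] := moduleP m0.
have xmod : is_module e A [set x].
  apply: moduleI; [by rewrite sub1set | by apply/set0Pn; exists x; rewrite inE |].
  by move=> w y1 y2 _ _; rewrite !inE => /eqP-> /eqP->.
have xA' : [set x] != A.
  apply: contra c0 => /eqP HA; move: s0; rewrite -HA => s0.
  have := subset_leq_card s0; rewrite cards1.
  have : 0 < #|M0| by rewrite card_gt0.
  lia.
have [M HM xM] := exmax (leqnn _) xmod xA'.
by exists M => //; rewrite -sub1set.
Qed.

Lemma gallai (A M N : {set V}) z : rconnected A (adjA e A) -> rconnected A (coadjA e A) ->
  M \in max_proper_modules e A -> N \in max_proper_modules e A ->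
  z \in M -> z \in N -> M = N.
Proof.
move=> cA ccA /maxpP[mM MA maxM] /maxpP[mN NA maxN] zM zN.
have [sM neM uM] := moduleP mM; have [sN neN uN] := moduleP mN.
case: (boolP (M \subset N)) => [MN|/subsetPn[p0 p0M p0N]]; first by rewrite (maxM N).
case: (boolP (N \subset M)) => [NM|/subsetPn[q0 q0N q0M]]; first by rewrite (maxN M).
have zA : z \in A by apply: (subsetP sM).
have mU : is_module e A (M :|: N).
  apply: moduleI; first by rewrite subUset sM sN.
    by apply/set0Pn; exists z; rewrite inE zM.
  move=> x y1 y2 xA; rewrite !inE negb_or => /andP[xM xN].
  have H y : (y \in M) || (y \in N) -> e x y = e x z.
    by case/orP => yM; [apply: uM | apply: uN].
  by move=> /H-> /H->.
have UA : M :|: N = A.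
  apply/eqP; apply: contraT => UA.
  have UM := maxM _ mU UA (subsetUl _ _).
  by move: q0M; rewrite -UM inE q0N orbT.
have fact1 p : p \in M -> p \notin N -> e p z = e p0 z.
  move=> pM pN; have pA : p \in A by apply: (subsetP sM).
  have p0A : p0 \in A by apply: (subsetP sM).
  have q0A : q0 \in A by apply: (subsetP sN).
  rewrite (uN p z q0) // esym (uM q0 p z) // (uM q0 z p0) // esym.
  by rewrite (uN p0 q0 z).
have fact2 w : w \in A -> ~~ ((w \in M) && (w \notin N)) -> w \in N.
  move=> wA; rewrite -UA inE in wA; case/orP: wA => // wM; by rewrite wM /= negbK.
have p0A : p0 \in A by apply: (subsetP sM).
case b: (e p0 z).
- have cl : forall u w, coadjA e A u w -> (u \in M) && (u \notin N) -> (w \in M) && (w \notin N).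
    move=> u w /and4P[uA wA _ neuw] /andP[uM0 uN0]; apply: contraT => wP.
    have := fact2 w wA wP => wN.
    by move: neuw; rewrite (uN u w z) // fact1 // b.
  have := connect_inv cl (forall_inP (forall_inP ccA p0 p0A) z zA).
  by rewrite p0M p0N zN andbF => /(_ isT).
- have cl : forall u w, adjA e A u w -> (u \in M) && (u \notin N) -> (w \in M) && (w \notin N).
    move=> u w /and3P[uA wA euw] /andP[uM0 uN0]; apply: contraT => wP.
    have := fact2 w wA wP => wN.
    by move: euw; rewrite (uN u w z) // fact1 // b.
  have := connect_inv cl (forall_inP (forall_inP cA p0 p0A) z zA).
  by rewrite p0M p0N zN andbF => /(_ isT).
Qed.


Lemma ch_props A C : C \in children e A -> [/\ C \subset A, C != A & is_module e A C].
Proof.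
rewrite /children; case: ifP => [_|H1]; first by rewrite inE.
case: ifP => H2.
  by case/maxpP => mC CA _; have [sC _ _] := moduleP mC.
case: ifP => H3 HC.
  split; [exact: rcomp_sub HC | exact: (rcomp_proper (A:=A) (@adj_sym A) H3 HC) | exact: rcomp_adj_module].
have H4 : ~~ rconnected A (coadjA e A) by move: H2 H3; case: rconnected => //=; case: rconnected.
split; [exact: rcomp_sub HC | exact: (rcomp_proper (A:=A) (@coadj_sym A) H4 HC) | exact: rcomp_coadj_module].
Qed.

Lemma ch_disj A C D z : C \in children e A -> D \in children e A -> z \in C -> z \in D -> C = D.
Proof.
rewrite /children; case: ifP => [_|H1]; first by rewrite inE.
case: ifP => H2.
  by case/andP: H2 => c1 c2; apply: gallai.
case: ifP => H3; [exact: (rcomp_disj (A:=A) (@adj_sym A)) | exact: (rcomp_disj (A:=A) (@coadj_sym A))].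
Qed.

Lemma ch_cover A x : ~~ is_leaf e A -> x \in A -> exists2 C, C \in children e A & x \in C.
Proof.
rewrite /is_leaf /children; case: ifP => [_|H1]; first by rewrite eqxx.
case: ifP => H2 _ xA.
  by apply: maxp_cover => //; move: H1; case: is_prime.
case: ifP => H3; exact: rcomp_cover.
Qed.

Lemma ch_adj A C D x y : C \in children e A -> D \in children e A -> C != D ->
  x \in C -> y \in D -> e x y -> adjacent_modules e C D.
Proof.
move=> HC HD CD xC yD exy.
have [sC _ mC] := ch_props HC; have [sD _ mD] := ch_props HD.
have [_ _ uC] := moduleP mC; have [_ _ uD] := moduleP mD.
have notin u : u \in C -> u \in D -> False by move=> uC' uD'; move/eqP: CD; apply; exact: (ch_disj HC HD uC' uD').
apply/forall_inP => x' x'C; apply/forall_inP => y' y'D.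
have yA : y \in A by apply: (subsetP sD).
have x'A : x' \in A by apply: (subsetP sC).
have yC : y \notin C by apply/negP => yC; exact: notin yC yD.
have x'D : x' \notin D by apply/negP => x'D; exact: notin x'C x'D.
rewrite (uD x' y' y) // esym (uC y x' x) // esym //.
Qed.

Let Fn := fun S : {set {set V}} => setT |: \bigcup_(A in S) children e A.
Lemma Fn_mono : {homo Fn : X Y / X \subset Y}.
Proof.
move=> X Y XY; apply: setUS; apply/subsetP => C /bigcupP[A AX CA].
by apply/bigcupP; exists A => //; apply: (subsetP XY).
Qed.
Lemma nodesE : nodes e = setT |: \bigcup_(A in nodes e) children e A.
Proof. by rewrite /nodes; symmetry; exact: (fixsetK Fn_mono). Qed.
Lemma setT_node : [set: V] \in nodes e.
Proof. by rewrite nodesE setU11. Qed.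
Lemma child_node A C : A \in nodes e -> C \in children e A -> C \in nodes e.
Proof. by move=> HA HC; rewrite nodesE; apply/setU1P; right; apply/bigcupP; exists A. Qed.
Lemma child_notT A C : C \in children e A -> C != setT.
Proof.
move=> HC; have [sC CA _] := ch_props HC; apply: contra CA => /eqP CT.
by rewrite eqEsubset sC CT subsetT.
Qed.

Lemma descent n (x y : V) : forall A : {set V}, #|A| <= n -> A \in nodes e -> x \in A -> y \in A ->
  (exists2 L, L \in nodes e & [&& is_leaf e L, x \in L & y \in L]) \/
  exists A', exists C, exists D, [/\ A' \in nodes e, C \in children e A',
     D \in children e A', C != D & (x \in C /\ y \in D)].
Proof.
elim: n => [|n IH] A Hn HA xA yA.
  by move: Hn; rewrite leqn0 cards_eq0 => /eqP A0; rewrite A0 inE in xA.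
case: (boolP (is_leaf e A)) => lA; first by left; exists A => //; rewrite lA xA yA.
have [C HC xC] := ch_cover lA xA; have [D HD yD] := ch_cover lA yA.
case: (eqVneq C D) => [CD|CD]; last by right; exists A, C, D.
subst D; have [sC CA _] := ch_props HC.
apply: (IH C) => //; last exact: child_node HC.
have : #|C| < #|A| by apply: proper_card; rewrite properEneq CA sC.
lia.
Qed.


Definition nv (v : V) : tvert e := Sub (inl v) isT.
Definition mk (M : {set V}) (b : bool) (H : tvalid e (inr (M, b))) : tvert e := Sub (inr (M, b)) H.

Lemma autT_normal p t : p \in AutT e -> is_normal (p t) = is_normal t.
Proof. by rewrite inE => /andP[/forallP H _]; apply/eqP; apply: H. Qed.
Lemma autT_ne p t u : p \in AutT e -> tnedge (p t) (p u) = tnedge t u.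
Proof.
rewrite inE => /andP[_ /forallP H]; have /forallP/(_ u)/andP[/eqP-> _] := H t; done.
Qed.
Lemma autT_te p t u : p \in AutT e -> ttedge (p t) (p u) = ttedge t u.
Proof.
rewrite inE => /andP[_ /forallP H]; have /forallP/(_ u)/andP[_ /eqP->] := H t; done.
Qed.
Lemma autT_inv p : p \in AutT e -> (p^-1)%g \in AutT e.
Proof.
move=> pA; rewrite inE; apply/andP; split.
  apply/forallP => t; have := autT_normal ((p^-1)%g t) pA.
  by rewrite permKV => ->.
apply/forallP => t; apply/forallP => u.
have := autT_ne ((p^-1)%g t) ((p^-1)%g u) pA; rewrite !permKV => ->.
by have := autT_te ((p^-1)%g t) ((p^-1)%g u) pA; rewrite !permKV => ->; rewrite !eqxx.
Qed.

Definition restf (p : {perm (tvert e)}) (v : V) : V :=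
  if p \in AutT e then (match val (p (nv v)) with inl w => w | inr _ => v end) else v.

Lemma restf_nv p v : p \in AutT e -> val (p (nv v)) = inl (restf p v).
Proof.
move=> pA; rewrite /restf pA.
case E: (val (p (nv v))) => [w|[M b]] //.
by have := autT_normal (nv v) pA; rewrite /is_normal E.
Qed.

Lemma restf_inj p : injective (restf p).
Proof.
move=> v w; case pA: (p \in AutT e); last by rewrite /restf pA.
move=> H; have : val (p (nv v)) = val (p (nv w)) by rewrite !restf_nv // H.
by move/val_inj/perm_inj/(congr1 val) => /= [].
Qed.

Definition rest p : {perm V} := perm (@restf_inj p).

Lemma rest_nv p v : p \in AutT e -> val (p (nv v)) = inl (rest p v).
Proof. by move=> pA; rewrite permE restf_nv. Qed.

Section AutTel.
Variable p : {perm (tvert e)}.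
Hypothesis pA : p \in AutT e.
Notation sg := (rest p).

Lemma p_flag M (H : tvalid e (inr (M, true))) :
  exists N, val (p (@mk M true H)) = inr (N, true) /\ val (p (@mk M false H)) = inr (N, false).
Proof.
have : ttedge (p (@mk M false H)) (p (@mk M true H)) by rewrite autT_te // /ttedge /= eqxx.
rewrite /ttedge; case: (val (p (@mk M false H))) => [//|[M' []//]].
case: (val (p (@mk M true H))) => [//|[N' []//]] /eqP ->.
by exists N'.
Qed.

Lemma ne_true M (H : tvalid e (inr (M, true))) u :
  tnedge (@mk M true H) u =
  match val u with
  | inl v => is_leaf e M && (v \in M)
  | inr (Mi, false) => Mi \in children e M
  | inr (_, true) => false
  end.
Proof. by rewrite /tnedge /=; case: (val u) => [v|[Mi []]]. Qed.

Lemma step M (H : tvalid e (inr (M, true))) :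
  (forall C (HC : tvalid e (inr (C, true))), C \in children e M ->
      val (p (@mk C true HC)) = inr (sg @: C, true)) ->
  val (p (@mk M true H)) = inr (sg @: M, true).
Proof.
move=> IHc.
have [N [EN EF]] := p_flag H.
set t := @mk M true H.
have vN : tvalid e (inr (N, true)) by rewrite -EN; exact: (valP (p t)).
have cvalid C : C \in children e M -> tvalid e (inr (C, true)).
  move=> HC; rewrite /= (child_notT HC) andbT; apply: child_node HC.
  by case/andP: (H).
have pC C (HC : C \in children e M) :
    val (p (@mk C false (cvalid C HC))) = inr (sg @: C, false).
  have [N' [E1 E2]] := p_flag (cvalid C HC).
  by rewrite E2; move: E1; rewrite IHc // => -[->].
have hb C : C \in children e M -> sg @: C \in children e N.
  move=> HC; have := autT_ne t (@mk C false (cvalid C HC)) pA.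
  rewrite ne_true /= HC /tnedge EN pC //.
have ha D : D \in children e N -> exists2 C, C \in children e M & D = sg @: C.
  move=> HD.
  have vD : tvalid e (inr (D, false)).
    by rewrite /= (child_notT HD) andbT; apply: child_node HD; case/andP: (vN).
  set u := ((p^-1)%g (@mk D false vD)).
  have pu : p u = @mk D false vD by rewrite permKV.
  have E1 : tnedge (p t) (@mk D false vD) by rewrite /tnedge EN /= HD.
  have Hne : tnedge t u by rewrite -(autT_ne t u pA) pu E1.
  rewrite ne_true in Hne.
  have Hn : is_normal u = false by rewrite -(autT_normal u pA) pu.
  move: Hn Hne; rewrite /is_normal; case Eu: (val u) => [//|[C []//]] _ HC.
  exists C => //.
  have : val (p u) = inr (D, false) by rewrite pu.
  have -> : u = @mk C false (cvalid C HC) by apply: val_inj; rewrite Eu.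
  by rewrite pC // => -[->].
have hc v : (is_leaf e M && (v \in M)) = (is_leaf e N && (sg v \in N)).
  have := autT_ne t (nv v) pA; rewrite ne_true /tnedge EN rest_nv //= => ->.
rewrite EN; congr (inr (_, true)).
case: (boolP (is_leaf e M)) => lM.
- have lN : is_leaf e N.
    apply/eqP/setP => D; rewrite inE; apply/negbTE/negP => HD.
    have [C HC _] := ha D HD; by move: HC; rewrite (eqP lM) inE.
  apply/setP => y; have -> : y = sg ((sg^-1)%g y) by rewrite permKV.
  by rewrite memI -[RHS]andTb -lM hc lN.
- have lN : ~~ is_leaf e N.
    move: lM; rewrite /is_leaf => /set0Pn[C HC]; apply/set0Pn; exists (sg @: C).
    exact: hb.
  apply/setP => y; apply/idP/idP => Hy.
    have [D HD yD] := ch_cover lN Hy; have [C HC DE] := ha D HD.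
    rewrite DE in yD; have [sC _ _] := ch_props HC.
    exact: (subsetP (imsetS _ sC) y yD).
  case/imsetP: Hy => x xM ->.
  have [C HC xC] := ch_cover lM xM; have [sC _ _] := ch_props (hb C HC).
  apply: (subsetP sC); exact: imset_f.
Qed.

Lemma mainp n : forall M : {set V}, #|M| <= n -> forall (H : tvalid e (inr (M, true))),
  val (p (@mk M true H)) = inr (sg @: M, true).
Proof.
elim: n => [|n IH] M Hn H; apply: step => C HC HCC.
  have [sC CM _] := ch_props HCC; move: Hn; rewrite leqn0 cards_eq0 => /eqP M0.
  exfalso; move: sC CM; rewrite M0 subset0 => /eqP C0; by rewrite C0 eqxx.
apply: IH; have [sC CM _] := ch_props HCC.
have : #|C| < #|M| by apply: proper_card; rewrite properEneq CM sC.
lia.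
Qed.

Lemma main M (H : tvalid e (inr (M, true))) : val (p (@mk M true H)) = inr (sg @: M, true).
Proof. exact: mainp (leqnn _) H. Qed.

Lemma mainf M (H : tvalid e (inr (M, true))) : val (p (@mk M false H)) = inr (sg @: M, false).
Proof. have [N [E1 E2]] := p_flag H; by rewrite E2; move: E1; rewrite main => -[->]. Qed.

Lemma edge_imp x y : e x y -> e (sg x) (sg y).
Proof.
move=> exy.
have := descent (leqnn #|[set: V]|) setT_node (in_setT x) (in_setT y).
case=> [[L HL /and3P[lL xL yL]] | [A' [C [D [HA HC HD CD [xC yD]]]]]].
  have : tnedge (nv x) (nv y).
    by rewrite /tnedge /= exy /=; apply/exists_inP; exists L => //; rewrite lL xL yL.
  by rewrite -(autT_ne _ _ pA) /tnedge !rest_nv //= => /andP[].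
have vC : tvalid e (inr (C, true)) by rewrite /= (child_notT HC) (child_node HA HC).
have vD : tvalid e (inr (D, true)) by rewrite /= (child_notT HD) (child_node HA HD).
have : tnedge (@mk C false vC) (@mk D false vD).
  rewrite /tnedge /= CD (ch_adj HC HD CD xC yD exy) andbT /=.
  by apply/exists_inP; exists A' => //; rewrite HC HD.
rewrite -(autT_ne _ _ pA) /tnedge !mainf /= => /and3P[_ _ /forall_inP H].
by have /forall_inP := H _ (imset_f _ xC); apply; apply: imset_f.
Qed.
End AutTel.

Lemma rest_inv p v : p \in AutT e -> rest (p^-1)%g (rest p v) = v.
Proof.
move=> pA; have pi := autT_inv pA.
have H : p (nv v) = nv (rest p v) by apply: val_inj; rewrite rest_nv.
have : val ((p^-1)%g (nv (rest p v))) = inl v by rewrite -H permK.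
by rewrite rest_nv // => -[].
Qed.

Lemma rest_autX p : p \in AutT e -> rest p \in AutX e.
Proof.
move=> pA; apply: autX_hsE => x y; apply/idP/idP; last exact: edge_imp.
by move/(edge_imp (autT_inv pA)); rewrite !rest_inv.
Qed.

Lemma lift_rest p : p \in AutT e -> lift (rest p) = p.
Proof.
move=> pA; apply/permP => u; apply: val_inj; rewrite lift_val ?rest_autX //.
case E: (val u) => [v|[M b]] /=.
  have -> : u = nv v by apply: val_inj; rewrite E.
  by rewrite rest_nv.
have H : tvalid e (inr (M, true)) by move: (valP u); rewrite E; case: (b).
case: b E => E.
  have -> : u = @mk M true H by apply: val_inj; rewrite E.
  by rewrite main.
have -> : u = @mk M false H by apply: val_inj; rewrite E.
by rewrite mainf.
Qed.

Lemma lift1 : lift 1%g = 1%g.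
Proof.
have oneA : (1%g : {perm V}) \in AutX e by apply: autX_hsE => x y; rewrite !perm1.
apply/permP => u; apply: val_inj; rewrite lift_val // perm1.
case: (val u) => [v|[M b]] /=; first by rewrite perm1.
congr (inr (_, b)); rewrite (eq_imset _ (fun x => perm1 x)); exact: imset_id.
Qed.

Theorem iso : AutX e \isog AutT e.
Proof.
apply: (@misom_isog _ _ _ _ lift); apply/andP; split.
  by apply/morphicP => s t sA tA; apply: lift_morph.
apply/eqP/setP => p; apply/imsetP/setD1P.
  case=> s /setD1P[s1 sA] ->; split; last exact: lift_autT.
  apply: contra s1 => /eqP H; apply/eqP/permP => v; rewrite perm1.
  have := lift_val (nv v) sA; rewrite H perm1 /= => -[] E; by rewrite -E.
case=> p1 pA; exists (rest p); last by rewrite lift_rest.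
apply/setD1P; split; last exact: rest_autX.
by apply: contra p1 => /eqP H; rewrite -(lift_rest pA) H lift1.
Qed.

End P.

Theorem mainTheorem2 (V : finType) (e : rel V) :
  symmetric e -> irreflexive e -> AutX e \isog AutT e.
Proof. by move=> hs hi; apply: iso. Qed.
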